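(* Let $n\ge1$ and let $P=a_1+a_2+\dots+a_k$ be a partition of $n$ (an ordered sum of positive integers) with every part $a_i\le 3$. Let $JSMP_n$ be the set of elements of the Jones' monoid $J_n$ for which $P$ is a partition. Then $JSMP_n$ is an idempotent monoid under the operation of $J_n$, i.e. it is a submonoid of $J_n$ in which every element $x$ satisfies $x\cdot x=x$.
   Context: A Kauffman diagram on $2n$ points is a rectangle with $n$ marked points on its upper side and $n$ on its lower side, the $2n$ points being paired by $n$ pairwise non-intersecting strings inside the rectangle, considered up to planar isotopy. The product $AB$ of two diagrams is formed by stacking $A$ on top of $B$ (identifying the lower side of $A$ with the upper side of $B$). The Jones' monoid $J_n$ is the set of Kauffman diagrams on $2n$ points with this concatenation product, where any closed loops arising in a product are simply deleted; its identity is the diagram with $n$ vertical strings. For $j\in J_n$, $P=a_1+\dots+a_k$ is said to be a partition of $j$ if $j$ can be divided by $k-1$ vertical line segments (not crossing any string) into consecutive parts, the $i$-th part containing $a_i$ strings (i.e. $a_i$ upper and $a_i$ lower marked points). *)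

(* Defs.v *)
From mathcomp Require Import all_boot.
Set Implicit Arguments. Unset Strict Implicit. Unset Printing Implicit Defensive.

(* Marked points of a Kauffman diagram on 2n points:
   (true, i) = i-th upper point, (false, i) = i-th lower point (i = 0..n-1,
   numbered left to right). *)
Definition kpt (n : nat) : finType := (bool * 'I_n)%type.

(* A (candidate) diagram is given by the pairing map: each point is sent to
   the other endpoint of its string.  A diagram up to planar isotopy is
   exactly determined by this non-crossing perfect matching. *)
Definition kdiag (n : nat) := {ffun kpt n -> kpt n}.

(* Position of a marked point on the boundary of the rectangle, read
   cyclically: upper side left to right, then lower side right to left. *)
Definition kpos (n : nat) (x : kpt n) : nat :=
  if x.1 then val x.2 else (2 * n).-1 - val x.2.

Definition is_kauffman (n : nat) (f : kdiag n) : bool :=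
  [forall x, (f (f x) == x) && (f x != x)] &&
  [forall x, forall y,
     ~~ [&& kpos x < kpos y, kpos y < kpos (f x) & kpos (f x) < kpos (f y)]].

Definition kid (n : nat) : kdiag n := [ffun x : kpt n => (~~ x.1, x.2)].

(* Following a string through the stacked picture A over B.
   inA = true : we are at point p of A, about to follow A's string from p;
   inA = false : same for B.  Middle points (lower side of A = upper side of B)
   are passed through.  fuel bounds the number of steps. *)
Fixpoint kwalk (n : nat) (A B : kdiag n) (fuel : nat) (inA : bool) (p : kpt n)
  : kpt n :=
  match fuel with
  | 0 => p
  | fuel'.+1 =>
    if inA then
      let q := A p in if q.1 then q else kwalk A B fuel' false (true, q.2)
    else
      let q := B p in if ~~ q.1 then q else kwalk A B fuel' true (false, q.2)
  end.

(* Product AB: A stacked on top of B, closed loops deleted.  An upper point of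
   AB is an upper point of A, a lower point of AB is a lower point of B.
   (2n+1 steps always suffice for genuine diagrams.) *)
Definition kmul (n : nat) (A B : kdiag n) : kdiag n :=
  [ffun x : kpt n => kwalk A B (2 * n).+1 x.1 x].

Definition cuts (P : seq nat) : seq nat :=
  [seq sumn (take i P) | i <- iota 1 (size P)].

(* P is a partition of f: vertical lines placed at the cuts cross no string,
   i.e. every string has both endpoints in the same part (the part of a point
   of index i is determined by its position relative to the cuts). *)
Definition has_partition (n : nat) (P : seq nat) (f : kdiag n) : bool :=
  [forall x, all (fun c => (val x.2 < c) == (val (f x).2 < c)) (cuts P)].

Definition jsmp (n : nat) (P : seq nat) (f : kdiag n) : bool :=
  is_kauffman f && has_partition P f.

(* Main.v *)
Require Import Defs.
From mathcomp Require Import all_boot zify.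
Set Implicit Arguments. Unset Strict Implicit. Unset Printing Implicit Defensive.

Definition pt := (bool * nat)%type.
Definition kposN (n : nat) (p : pt) : nat := if p.1 then p.2 else (2 * n).-1 - p.2.
Definition chainN n (F : pt -> pt) (p q : pt) : bool :=
  [&& kposN n p < kposN n q, kposN n q < kposN n (F p) & kposN n (F p) < kposN n (F q)].
Definition ptsL (a : nat) : seq pt :=
  [seq (true, j) | j <- iota 0 a] ++ [seq (false, j) | j <- iota 0 a].
Definition KNb a (F : pt -> pt) : bool :=
  all (fun p => [&& (F p).2 < a, F (F p) == p & F p != p]) (ptsL a) &&
  all (fun p => all (fun q => ~~ chainN a F p q) (ptsL a)) (ptsL a).
Definition tab a (v : seq pt) (p : pt) : pt :=
  if p.2 < a then nth p v (if p.1 then p.2 else a + p.2) else p.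
Fixpoint seqs (k : nat) (D : seq pt) : seq (seq pt) :=
  if k is k'.+1 then [seq x :: s | x <- D, s <- seqs k' D] else [:: [::]].
Definition allv a := seqs (2 * a) (ptsL a).
Definition VL a := [seq v <- allv a | KNb a (tab a v)].
Fixpoint kwalkO (F G : pt -> pt) (fuel : nat) (inA : bool) (p : pt) : option pt :=
  match fuel with
  | 0 => None
  | fuel'.+1 =>
    if inA then
      let q := F p in if q.1 then Some q else kwalkO F G fuel' false (true, q.2)
    else
      let q := G p in if ~~ q.1 then Some q else kwalkO F G fuel' true (false, q.2)
  end.
Fixpoint kwalkN (F G : pt -> pt) (fuel : nat) (inA : bool) (p : pt) : pt :=
  match fuel with
  | 0 => p
  | fuel'.+1 =>
    if inA then
      let q := F p in if q.1 then q else kwalkN F G fuel' false (true, q.2)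
    else
      let q := G p in if ~~ q.1 then q else kwalkN F G fuel' true (false, q.2)
  end.
Definition prodV a v1 v2 :=
  [seq odflt p (kwalkO (tab a v1) (tab a v2) (2 * a).+1 p.1 p) | p <- ptsL a].
Definition idlist a := [seq (~~ p.1, p.2) | p <- ptsL a].
Definition check a :=
  let L := VL a in
  [&& idlist a \in L,
      all (fun v => prodV a v v == v) L &
      all (fun v1 => all (fun v2 =>
         all (fun p => kwalkO (tab a v1) (tab a v2) (2 * a).+1 p.1 p != None) (ptsL a)
         && (prodV a v1 v2 \in L)) L) L].

Lemma mem_ptsL a p : (p \in ptsL a) = (p.2 < a).
Proof.
case: p => c j /=; apply/idP/idP.
  by rewrite mem_cat => /orP [] /mapP [k]; rewrite mem_iota => /andP[_ Hk] [_ ->].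
move=> Hj; rewrite mem_cat; apply/orP; case: c; [left | right];
  by apply/mapP; exists j => //; rewrite mem_iota add0n Hj.
Qed.

Lemma size_ptsL a : size (ptsL a) = 2 * a.
Proof. by rewrite size_cat !size_map size_iota; lia. Qed.

Lemma nth_ptsL a c j d : j < a -> nth d (ptsL a) (if c then j else a + j) = (c, j).
Proof.
move=> Hj; rewrite nth_cat size_map size_iota; case: c.
  by rewrite Hj (nth_map 0) ?size_iota // nth_iota.
by rewrite ltnNge leq_addr /= addKn (nth_map 0) ?size_iota // nth_iota.
Qed.

Lemma tab_map a (F : pt -> pt) c j : j < a -> tab a (map F (ptsL a)) (c, j) = F (c, j).
Proof.
move=> Hj; rewrite /tab /= Hj (nth_map (c, j)) ?nth_ptsL // size_ptsL; case: c; lia.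
Qed.

Lemma KNbP a T : KNb a T ->
  (forall p, p.2 < a -> [/\ (T p).2 < a, T (T p) = p & T p != p]) /\
  (forall p q, p.2 < a -> q.2 < a -> ~~ chainN a T p q).
Proof.
case/andP => /allP H1 /allP H2; split.
  move=> p Hp; have := H1 p; rewrite mem_ptsL => /(_ Hp) /and3P [? /eqP ? ?]; by split.
move=> p q Hp Hq; have := H2 p; rewrite mem_ptsL => /(_ Hp) /allP /(_ q).
by rewrite mem_ptsL => /(_ Hq).
Qed.

Lemma KNbI a T :
  (forall p, p.2 < a -> [/\ (T p).2 < a, T (T p) = p & T p != p]) ->
  (forall p q, p.2 < a -> q.2 < a -> ~~ chainN a T p q) -> KNb a T.
Proof.
move=> H1 H2; apply/andP; split; apply/allP => p; rewrite mem_ptsL => Hp.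
  by case: (H1 p Hp) => -> -> ->; rewrite eqxx.
by apply/allP => q; rewrite mem_ptsL => Hq; exact: H2.
Qed.

Lemma seqsP (D : seq pt) k v : size v = k -> all (fun x => x \in D) v -> v \in seqs k D.
Proof.
elim: k v => [|k IH] [|x v] //=.
by case=> Hs /andP [Hx Hv]; exact: (allpairs_f (fun x s => x :: s) Hx (IH _ Hs Hv)).
Qed.

Lemma VL_KNb a v : v \in VL a -> KNb a (tab a v).
Proof. by rewrite mem_filter => /andP []. Qed.

Lemma c3 : check 3. Proof. by vm_compute. Qed.
Lemma c2 : check 2. Proof. by vm_compute. Qed.
Lemma c1 : check 1. Proof. by vm_compute. Qed.
Lemma checkP a : 0 < a <= 3 -> check a.
Proof. case: a => [|[|[|[|a]]]] H; [by [] | exact: c1 | exact: c2 | exact: c3 | by []]. Qed.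


Definition shift s (p : pt) : pt := (p.1, s + p.2).

Lemma shift_inj s : injective (shift s).
Proof. by case=> [b i] [b' i'] [-> /eqP]; rewrite eqn_add2l => /eqP ->. Qed.

Lemma kpos_shift n s a p q : s + a <= n -> p.2 < a -> q.2 < a ->
  (kposN a p < kposN a q) = (kposN n (shift s p) < kposN n (shift s q)).
Proof.
by case: p q => [[] i] [[] k]; rewrite /kposN /shift /= => *; apply/idP/idP; lia.
Qed.

Lemma chain_shift n s a (T F : pt -> pt) p q : s + a <= n -> p.2 < a -> q.2 < a ->
  (T p).2 < a -> (T q).2 < a ->
  F (shift s p) = shift s (T p) -> F (shift s q) = shift s (T q) ->
  chainN a T p q = chainN n F (shift s p) (shift s q).
Proof.
move=> Hn Hp Hq HTp HTq Fp Fq; rewrite /chainN Fp Fq.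
by rewrite (kpos_shift Hn Hp Hq) (kpos_shift Hn Hq HTp) (kpos_shift Hn HTp HTq).
Qed.

Lemma sep n c (x fx y fy : pt) : x.2 < n -> fx.2 < n -> y.2 < n -> fy.2 < n ->
  (x.2 < c) = (fx.2 < c) -> (y.2 < c) = (fy.2 < c) -> (x.2 < c) != (y.2 < c) ->
  ~~ [&& kposN n x < kposN n y, kposN n y < kposN n fx & kposN n fx < kposN n fy].
Proof.
case: x fx y fy => [bx i] [bfx i'] [by_ k] [bfy k'] /=; rewrite /kposN /=.
move=> H1 H2 H3 H4.
case: (ltnP i c) => Hi; case: (ltnP i' c) => Hi' //= _;
case: (ltnP k c) => Hk; case: (ltnP k' c) => Hk' //= _ _;
apply/negP => /and3P[]; case: bx; case: bfx; case: by_; case: bfy => /=; lia.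
Qed.

Lemma cuts_cons x P : cuts (x :: P) = x :: map (addn x) (cuts P).
Proof.
rewrite /cuts /= take0 addn0; congr (_ :: _).
rewrite -[2]/(1 + 1) iotaDl -!map_comp; apply: eq_map => i /=.
by [].
Qed.

Definition blockOK P s a := [/\ 0 < a <= 3, s + a <= sumn P, (s == 0) || (s \in cuts P),
  s + a \in cuts P & forall c, c \in cuts P -> (c <= s) || (s + a <= c)].

Lemma blockE P i : all (fun a => 0 < a <= 3) P -> i < sumn P ->
  exists s a, blockOK P s a /\ s <= i < s + a.
Proof.
elim: P i => [|x P IH] i /=; first by rewrite ltn0.
case/andP => Hx HP Hi; case: (ltnP i x) => Hix.
  exists 0, x; split; last by rewrite add0n.
  split => //; rewrite ?add0n ?leq_addr ?cuts_cons ?inE ?eqxx //.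
  by move=> c; rewrite inE => /orP [/eqP -> | /mapP [c' _ ->]]; rewrite ?leqnn ?leq_addr orbT.
have [s [a [[Ha Hsa Hs Hsac Hc] Hi']]] := IH (i - x) HP ltac:(lia).
exists (x + s), a; split; last by lia.
split => //; rewrite ?cuts_cons ?inE.
- by rewrite /=; lia.
- case/orP: Hs => [/eqP -> | Hs]; first by rewrite addn0 eqxx orbT.
  by apply/orP; right; apply/orP; right; apply: map_f.
- by rewrite -addnA; apply/orP; right; apply: map_f.
- move=> c /orP [/eqP -> | /mapP [c' Hc' ->]]; first by rewrite leq_addr.
  by have := Hc c' Hc'; lia.
Qed.

Lemma sides P s a i i' : blockOK P s a -> s <= i < s + a -> s <= i' < s + a ->
  all (fun c => (i < c) == (i' < c)) (cuts P).
Proof.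
case=> _ _ _ _ Hc Hi Hi'; apply/allP => c /Hc H; apply/eqP.
by case/orP: H => H; apply/idP/idP; lia.
Qed.

Definition invN n (F : pt -> pt) := forall p, p.2 < n -> [/\ (F p).2 < n, F (F p) = p & F p != p].
Definition ncN n (F : pt -> pt) := forall p q, p.2 < n -> q.2 < n -> ~~ chainN n F p q.
Definition partN P n (F : pt -> pt) :=
  forall p, p.2 < n -> all (fun c => (p.2 < c) == ((F p).2 < c)) (cuts P).

Lemma shift_split s p : s <= p.2 -> p = shift s (p.1, p.2 - s).
Proof. by case: p => c i /= H; rewrite /shift /= subnKC. Qed.

Lemma globalize P (F : pt -> pt) : all (fun a => 0 < a <= 3) P ->
  (forall s a, blockOK P s a -> exists2 v, v \in VL a &
     forall c j, j < a -> F (c, s + j) = shift s (tab a v (c, j))) ->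
  [/\ invN (sumn P) F, ncN (sumn P) F & partN P (sumn P) F].
Proof.
move=> HP H.
have blk : forall p : pt, p.2 < sumn P -> exists s a v, [/\ blockOK P s a, v \in VL a,
   s <= p.2 < s + a & forall t, t.2 < a -> F (shift s t) = shift s (tab a v t)].
  move=> p Hp; have [s [a [Hb Hpi]]] := blockE HP Hp; have [v Hv Hrep] := H s a Hb.
  exists s, a, v; split => // -[c k] /= Hk; exact: Hrep.
have Hinv : invN (sumn P) F.
  move=> p Hp; have [s [a [v [Hb Hv Hpi Hrep]]]] := blk p Hp.
  have [[T1 _] [_ Hsa _ _ _]] := (KNbP (VL_KNb Hv), Hb).
  have Hj : (p.1, p.2 - s).2 < a by rewrite /=; lia.
  have [T1a T1b T1c] := T1 _ Hj.
  rewrite (@shift_split s p); last by lia.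
  rewrite Hrep // Hrep // T1b.
  split; first by rewrite /=; lia.
    by [].
  by rewrite (inj_eq (@shift_inj s)).
have Hpart : partN P (sumn P) F.
  move=> p Hp; have [s [a [v [Hb Hv Hpi Hrep]]]] := blk p Hp.
  have [T1 _] := KNbP (VL_KNb Hv).
  have Hj : (p.1, p.2 - s).2 < a by rewrite /=; lia.
  have [T1a _ _] := T1 _ Hj.
  rewrite {2}(@shift_split s p) ?Hrep //; last by lia.
  apply: (sides Hb) => //=; move: T1a Hpi; clear; set t := tab _ _ _; lia.
split; [exact: Hinv | | exact: Hpart].
move=> p q Hp Hq; have [s [a [v [Hb Hv Hpi Hrep]]]] := blk p Hp.
have [T1 T2] := KNbP (VL_KNb Hv).
have Hb' := Hb; case: Hb' => _ Hsa Hs Hsac _.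
have Hj : (p.1, p.2 - s).2 < a by rewrite /=; lia.
case: (boolP (s <= q.2 < s + a)) => Hqin.
  have Hk : (q.1, q.2 - s).2 < a by rewrite /=; lia.
  have [T1a _ _] := T1 _ Hj; have [T1a' _ _] := T1 _ Hk.
  rewrite (@shift_split s p); last by lia.
  rewrite (@shift_split s q); last by lia.
  by rewrite -(@chain_shift _ s a (tab a v)) ?Hrep //; exact: T2.
have [Fp _ _] := Hinv p Hp; have [Fq _ _] := Hinv q Hq.
have sepc : forall c, c \in cuts P -> (p.2 < c) != (q.2 < c) -> ~~ chainN (sumn P) F p q.
  move=> c Hc Hne; rewrite /chainN; apply: (sep (c := c)) => //.
    by have /= /eqP := allP (Hpart p Hp) c Hc.
  by have /= /eqP := allP (Hpart q Hq) c Hc.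
case: (ltnP q.2 s) => Hqs.
  apply: (sepc s); last by apply/negP => /eqP; lia.
  by case/orP: Hs => // /eqP Hs0; move: Hqs; rewrite Hs0.
apply: (sepc (s + a)) => //; apply/negP => /eqP; lia.
Qed.


Definition proj n (x : kpt n) : pt := (x.1, val x.2).
Definition E n (f : kdiag n) (p : pt) : pt :=
  if (insub p.2 : option 'I_n) is Some o then proj (f (p.1, o)) else p.

Lemma E_proj n (f : kdiag n) x : E f (proj x) = proj (f x).
Proof. by rewrite /E /proj /= valK; case: x. Qed.

Lemma proj_inj n : injective (@proj n).
Proof. by case=> [b o] [b' o'] [-> /val_inj ->]. Qed.

Lemma ex_proj n (p : pt) : p.2 < n -> exists x : kpt n, p = proj x.
Proof. by case: p => c i /= H; exists (c, Ordinal H). Qed.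

Lemma kwalk_proj n (A B : kdiag n) k b x :
  proj (kwalk A B k b x) = kwalkN (E A) (E B) k b (proj x).
Proof.
elim: k b x => [|k IH] [] x //=; rewrite E_proj.
  by case: (A x) => [[] o] //=; rewrite IH.
by case: (B x) => [[] o] //=; rewrite IH.
Qed.

Lemma eq_kwalk (F F' G G' : pt -> pt) k b p : F =1 F' -> G =1 G' ->
  kwalkN F G k b p = kwalkN F' G' k b p.
Proof. by move=> HF HG; elim: k b p => [|k IH] [] p //=; rewrite ?HF ?HG IH. Qed.

Lemma kwalkO_N (F G : pt -> pt) k m b p r :
  kwalkO F G k b p = Some r -> kwalkN F G (k + m) b p = r.
Proof.
elim: k b p => [|k IH] b p //=; case: b;
  case: ifP => _; try (by case=> ->); exact: IH.
Qed.

Definition locA s a (F : pt -> pt) (p : pt) : pt :=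
  if p.2 < a then ((F (shift s p)).1, (F (shift s p)).2 - s) else p.

Lemma kwalk_shift s a (F G : pt -> pt) k b c j :
  (forall c j, j < a -> s <= (F (c, s + j)).2 < s + a) ->
  (forall c j, j < a -> s <= (G (c, s + j)).2 < s + a) -> j < a ->
  kwalkN F G k b (c, s + j) = shift s (kwalkN (locA s a F) (locA s a G) k b (c, j)).
Proof.
move=> HF HG; elim: k b c j => [|k IH] b c j Hj //=.
case: b; rewrite /locA /= Hj.
  have := HF c j Hj; rewrite /shift /=.
  case: (F (c, s + j)) => [[] i] /= Hi.
    by rewrite subnKC //; case/andP: Hi.
  have -> : (true, i) = (true, s + (i - s)) by rewrite subnKC //; case/andP: Hi.
  by apply: IH; lia.
have := HG c j Hj; rewrite /shift /=.
case: (G (c, s + j)) => [[] i] /= Hi.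
  have -> : (false, i) = (false, s + (i - s)) by rewrite subnKC //; case/andP: Hi.
  by apply: IH; lia.
by rewrite subnKC //; case/andP: Hi.
Qed.

Lemma E_kmul n (A B : kdiag n) p : p.2 < n ->
  E (kmul A B) p = kwalkN (E A) (E B) (2 * n).+1 p.1 p.
Proof. by case/ex_proj => x ->; rewrite E_proj ffunE kwalk_proj. Qed.

Lemma kauff_to n (f : kdiag n) : is_kauffman f -> invN n (E f) /\ ncN n (E f).
Proof.
case/andP => /forallP H1 /forallP H2; split.
  move=> p /ex_proj [x ->]; rewrite !E_proj; have /andP [/eqP h1 h2] := H1 x.
  by split; [exact: ltn_ord | rewrite h1 | rewrite (inj_eq (@proj_inj n))].
move=> p q /ex_proj [x ->] /ex_proj [y ->]; rewrite /chainN !E_proj.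
exact: (forallP (H2 x) y).
Qed.

Lemma kauff_from n (f : kdiag n) : invN n (E f) -> ncN n (E f) -> is_kauffman f.
Proof.
move=> Hi Hn; apply/andP; split; apply/forallP => x.
  have [_ h1 h2] := Hi (proj x) (ltn_ord _); rewrite !E_proj in h1 h2.
  by rewrite (proj_inj h1) eqxx /= -(inj_eq (@proj_inj n)).
apply/forallP => y; have := Hn (proj x) (proj y) (ltn_ord _) (ltn_ord _).
by rewrite /chainN !E_proj.
Qed.

Lemma part_to n P (f : kdiag n) : has_partition P f -> partN P n (E f).
Proof. by move=> /forallP H p /ex_proj [x ->]; rewrite E_proj; exact: H. Qed.

Lemma part_from n P (f : kdiag n) : partN P n (E f) -> has_partition P f.
Proof.
by move=> H; apply/forallP => x; have := H (proj x) (ltn_ord _); rewrite E_proj.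
Qed.


Lemma preserve P (F : pt -> pt) s a c j : partN P (sumn P) F -> blockOK P s a -> j < a ->
  s <= (F (c, s + j)).2 < s + a.
Proof.
move=> H [_ Hsa Hs Hsac _] Hj.
have Hall := allP (H (c, s + j) ltac:(rewrite /=; lia)).
have /eqP H1 := Hall _ Hsac.
move: H1; set y := (F _).2 => H1.
have Hy1 : y < s + a by rewrite -H1 /=; lia.
case/orP: Hs => [/eqP Hs0 | Hs]; first by rewrite Hy1 Hs0 leq0n.
have /eqP H2 := Hall _ Hs.
have Hy2 : s <= y by rewrite leqNgt -H2 /=; lia.
by rewrite Hy1 Hy2.
Qed.

Lemma localize P (F : pt -> pt) s a : invN (sumn P) F -> ncN (sumn P) F ->
  partN P (sumn P) F -> blockOK P s a ->
  exists2 v, v \in VL a & forall c j, j < a -> F (c, s + j) = shift s (tab a v (c, j)).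
Proof.
move=> Hi Hn Hp Hb; have Hb' := Hb; case: Hb' => Ha Hsa _ _ _.
set L := locA s a F.
have Lsh : forall t : pt, t.2 < a -> F (shift s t) = shift s (L t) /\ (L t).2 < a.
  case=> c j /= Hj; rewrite /L /locA /= Hj.
  have := preserve c Hp Hb Hj; rewrite /shift /=.
  case: (F (c, s + j)) => b i /= /andP [Hi1 Hi2].
  by rewrite subnKC //; split => //; lia.
have tabL : forall t : pt, t.2 < a -> tab a (map L (ptsL a)) t = L t.
  by case=> c j /= Hj; rewrite tab_map.
exists (map L (ptsL a)).
  rewrite mem_filter; apply/andP; split.
    apply: KNbI.
      case=> c j /= Hj; rewrite tabL //.
      have [HL1 HL2] := Lsh (c, j) Hj.
      move: (L (c, j)) HL1 HL2 => t HL1 HL2.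
      rewrite tabL //; have [Ht1 Ht2] := Lsh t HL2.
      have [_ Hff Hfx] := Hi (shift s (c, j)) ltac:(rewrite /=; lia).
      rewrite HL1 Ht1 in Hff; rewrite HL1 in Hfx.
      split => //; first exact: shift_inj Hff.
      by apply: contraNneq Hfx => ->.
    move=> p q Hp' Hq'.
    have [Fp Lp] := Lsh p Hp'; have [Fq Lq] := Lsh q Hq'.
    have -> : chainN a (tab a (map L (ptsL a))) p q = chainN a L p q
      by rewrite /chainN (tabL p Hp') (tabL q Hq').
    rewrite (@chain_shift (sumn P) s a L F) //.
    by apply: Hn; rewrite /=; lia.
  apply: seqsP; first by rewrite size_map size_ptsL.
  by apply/allP => x /mapP [t]; rewrite mem_ptsL => Ht ->; rewrite mem_ptsL; case: (Lsh t Ht).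
move=> c j Hj; rewrite tabL //; exact: (Lsh (c, j) Hj).1.
Qed.

Lemma prod_rep P (A B : kdiag (sumn P)) s a vA vB : blockOK P s a ->
  vA \in VL a -> vB \in VL a ->
  (forall c j, j < a -> E A (c, s + j) = shift s (tab a vA (c, j))) ->
  (forall c j, j < a -> E B (c, s + j) = shift s (tab a vB (c, j))) ->
  forall c j, j < a -> E (kmul A B) (c, s + j) = shift s (tab a (prodV a vA vB) (c, j)).
Proof.
move=> Hb HA HB RA RB c j Hj; have Hb' := Hb; case: Hb' => Ha Hsa _ _ _.
rewrite E_kmul; last by rewrite /=; lia.
have HF : forall c j, j < a -> s <= (E A (c, s + j)).2 < s + a.
  move=> c' j' Hj'; rewrite RA //=.
  have [T1 _ _] := (KNbP (VL_KNb HA)).1 (c', j') Hj'.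
  by move: T1; set t := tab _ _ _; lia.
have HG : forall c j, j < a -> s <= (E B (c, s + j)).2 < s + a.
  move=> c' j' Hj'; rewrite RB //=.
  have [T1 _ _] := (KNbP (VL_KNb HB)).1 (c', j') Hj'.
  by move: T1; set t := tab _ _ _; lia.
rewrite (kwalk_shift _ _ _ HF HG Hj).
rewrite (@eq_kwalk _ (tab a vA) _ (tab a vB)); first last.
- case=> c' j'; rewrite /locA /=; case: ifP => Hj'; last by rewrite /tab /= Hj'.
  by rewrite RB //=; case: (tab a vB _) => ? ? /=; rewrite addKn.
- case=> c' j'; rewrite /locA /=; case: ifP => Hj'; last by rewrite /tab /= Hj'.
  by rewrite RA //=; case: (tab a vA _) => ? ? /=; rewrite addKn.
have := checkP Ha; rewrite /check => /and3P [_ _ /allP H3].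
have /allP H4 := H3 _ HA; have /andP [/allP Hterm _] := H4 _ HB.
have := Hterm (c, j); rewrite mem_ptsL => /(_ Hj).
case Ew : (kwalkO _ _ _ _ _) => [r|] // _.
rewrite (_ : (2 * sumn P).+1 = (2 * a).+1 + 2 * (sumn P - a)); last by lia.
rewrite (kwalkO_N _ Ew) /prodV tab_map //; congr (shift s _); by move: Ew => /= ->.
Qed.


Theorem proposition3p2 (n : nat) (P : seq nat) :
  0 < n ->
  all (fun a => 0 < a <= 3) P ->
  sumn P = n ->
  [/\ jsmp P (kid n),
      (forall x y : kdiag n, jsmp P x -> jsmp P y -> jsmp P (kmul x y))
    & (forall x : kdiag n, jsmp P x -> kmul x x = x)].
Proof.
move=> _ HP <-.
have jloc : forall x : kdiag (sumn P), jsmp P x -> forall s a, blockOK P s a ->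
    exists2 v, v \in VL a & forall c j, j < a -> E x (c, s + j) = shift s (tab a v (c, j)).
  move=> x /andP [Hk Hp] s a Hb; have [Hi Hn] := kauff_to Hk.
  exact: localize Hi Hn (part_to Hp) Hb.
have jglob : forall x : kdiag (sumn P), (forall s a, blockOK P s a ->
    exists2 v, v \in VL a & forall c j, j < a -> E x (c, s + j) = shift s (tab a v (c, j))) ->
    jsmp P x.
  move=> x H; have [Hi Hn Hp] := globalize HP H.
  by apply/andP; split; [exact: kauff_from | exact: part_from].
split.
- apply: jglob => s a Hb; have Hb' := Hb; case: Hb' => Ha Hsa _ _ _.
  have := checkP Ha; rewrite /check => /and3P [Hid _ _].
  exists (idlist a) => // c j Hj.
  have Hsj : s + j < sumn P by lia.
  have -> : (c, s + j) = proj ((c, Ordinal Hsj) : kpt (sumn P)) by [].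
  by rewrite E_proj ffunE /idlist tab_map.
- move=> x y Hx Hy; apply: jglob => s a Hb; have Hb' := Hb; case: Hb' => Ha _ _ _ _.
  have [vA HA RA] := jloc x Hx s a Hb; have [vB HB RB] := jloc y Hy s a Hb.
  exists (prodV a vA vB); last exact: prod_rep.
  have := checkP Ha; rewrite /check => /and3P [_ _ /allP H3].
  by have /allP H4 := H3 _ HA; have /andP [_ ->] := H4 _ HB.
- move=> x Hx; apply/ffunP => z; apply: (@proj_inj (sumn P)); rewrite -!E_proj.
  have [s [a [Hb Hz]]] := blockE HP (ltn_ord z.2).
  have Hb' := Hb; case: Hb' => Ha _ _ _ _.
  have [v Hv R] := jloc x Hx s a Hb.
  have Hj : nat_of_ord z.2 - s < a by lia.
  have -> : proj z = (z.1, s + (nat_of_ord z.2 - s)) by rewrite /proj subnKC //; case/andP: Hz.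
  rewrite (prod_rep Hb Hv Hv R R) // R //.
  have := checkP Ha; rewrite /check => /and3P [_ /allP H2 _].
  by rewrite (eqP (H2 _ Hv)).
Qed.
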